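(* Let $n\in\mathbb{N}$, $\sigma\in[1/n,1]$, $\varepsilon\in(0,1)$, and let $q$ be an $n$-arm bandit with expected utilities vector $u\in[0,1]^n$. Let $\tilde u\in[0,1]^n$ be an arbitrary vector (the message received by the verifier of Protocol 1). Suppose there exists a $\sigma$-smooth strategy $\pi$ with $|\pi\cdot u-\pi\cdot\tilde u|\ge\varepsilon/2$. Then the verifier of Protocol 1, run on $\tilde u$ with oracle access to $\mathcal{O}_q$, rejects with probability at least $2/3$.
   Context: An $n$-arm bandit is a vector $q=(q_1,\dots,q_n)$ of distributions on $[0,1]$; its oracle $\mathcal{O}_q$ returns, on query (''pull'') $i$, an independent sample from $q_i$; $u_i=\mathbb{E}_{x\sim q_i}[x]$. A strategy $\pi$ is a distribution on $[n]$ with $\pi\cdot u=\sum_i\pi_iu_i$; it is $\sigma$-smooth if $\pi_i\le\sigma$ for all $i$. Protocol 1 (parameters $n,\sigma,\varepsilon$): Let $L=\log_4(1/\varepsilon)+2$ and $B=\{0,1,\dots,\lceil\log_4(1/\varepsilon)\rceil\}$. For $b\in B$ let $\varepsilon_b=\varepsilon\cdot4^b$, $a_b=\lceil 4^b\cdot 4n\sigma\cdot L\cdot\ln 6\rceil$ and $m_b=\lceil 128\ln(12\,L\,a_b)/\varepsilon_b^2\rceil$. The honest prover pulls each arm $i\in[n]$ exactly $k_P=\lceil128\ln(12n/\varepsilon)/\varepsilon^2\rceil$ times and sends the vector $\tilde u$ of empirical averages. The verifier receives $\tilde u\in[0,1]^n$; for each $b\in B$ and each $t\in[a_b]$, it samples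 $i_{b,t}$ uniformly from $[n]$ (independently), pulls arm $i_{b,t}$ exactly $m_b$ times, lets $\hat u_{i_{b,t}}$ be the empirical average, and rejects (terminating) if $|\tilde u_{i_{b,t}}-\hat u_{i_{b,t}}|>\varepsilon_b/8$. If it never rejects, it outputs the strategy $\pi_V$ computed from $\tilde u$ as follows: sort indices $i_1,\dots,i_n$ so that $\tilde u_{i_1}\ge\dots\ge\tilde u_{i_n}$, set $\pi_{i_j}=\sigma$ for $j\le\lfloor1/\sigma\rfloor$, $\pi_{i_j}=1-\sigma\lfloor1/\sigma\rfloor$ for $j=\lfloor1/\sigma\rfloor+1$, and $\pi_{i_j}=0$ otherwise. *)

(* Defs.v *)
From HB Require Import structures.
From mathcomp Require Import all_boot all_order all_algebra.
From mathcomp Require Import all_classical all_reals all_analysis.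
Set Implicit Arguments. Unset Strict Implicit. Unset Printing Implicit Defensive.
Import Order.TTheory GRing.Theory Num.Theory.
Local Open Scope classical_set_scope.
Local Open Scope ring_scope.

Section Bandit.
Variable R : realType.

Definition supported01 (mu : probability R R) : Prop :=
  mu [set x : R | 0 <= x <= 1] = 1%E.

Definition mean (mu : probability R R) : R := fine (\int[mu]_x (x%:E)).

(* iter_pull mu A k s = probability that s + X_1 + ... + X_k lies in A,
   where X_1,...,X_k are i.i.d. samples from mu (iterated integral
   = k-fold product measure of the event). *)
Fixpoint iter_pull (mu : probability R R) (A : set R) (k : nat) (s : R) : \bar R :=
  match k with
  | 0%N => (\1_A s)%:E
  | k'.+1 => \int[mu]_x iter_pull mu A k' (s + x)
  end.

Definition pass_prob (mu : probability R R) (c d : R) (m : nat) : R :=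
  fine (iter_pull mu [set s : R | `|c - s / m%:R| <= d] m 0).

Definition ceilN (x : R) : nat := `|Num.ceil x|%N.

Definition log4 (x : R) : R := ln x / ln 4.

Definition P1_L (eps : R) : R := log4 (1 / eps) + 2.
Definition P1_Bmax (eps : R) : nat := ceilN (log4 (1 / eps)).
Definition P1_eps (eps : R) (b : nat) : R := eps * 4 ^+ b.
Definition P1_a (n : nat) (sigma eps : R) (b : nat) : nat :=
  ceilN (4 ^+ b * (4 * n%:R * sigma) * P1_L eps * ln 6).
Definition P1_m (n : nat) (sigma eps : R) (b : nat) : nat :=
  ceilN (128 * ln (12 * P1_L eps * (P1_a n sigma eps b)%:R) / (P1_eps eps b) ^+ 2).

(* Probability that the verifier of Protocol 1 accepts message ut:
   all checks (b,t), b in B, t in [a_b], are independent; each picks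
   i uniformly in [n], pulls arm i m_b times and passes iff
   |ut_i - empirical average| <= eps_b / 8. *)
Definition P1_accept_prob (n : nat) (sigma eps : R)
    (q : 'I_n -> probability R R) (ut : 'I_n -> R) : R :=
  \prod_(b < (P1_Bmax eps).+1)
    \prod_(t < P1_a n sigma eps b)
      (n%:R^-1 * \sum_(i < n)
          pass_prob (q i) (ut i) (P1_eps eps b / 8) (P1_m n sigma eps b)).

Definition P1_reject_prob (n : nat) (sigma eps : R) (q : 'I_n -> probability R R) (ut : 'I_n -> R) : R :=
  1 - P1_accept_prob sigma eps q ut.

Definition smooth_strategy (n : nat) (sigma : R) (pi : 'I_n -> R) : Prop :=
  (forall i, 0 <= pi i) /\ \sum_(i < n) pi i = 1 /\ (forall i, pi i <= sigma).

Definition dotp (n : nat) (x y : 'I_n -> R) : R := \sum_(i < n) x i * y i.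

End Bandit.

(* Main.v *)
Require Import Defs.
From HB Require Import structures.
From mathcomp Require Import all_boot all_order all_algebra.
From mathcomp Require Import all_classical all_reals all_analysis.
Import Order.TTheory GRing.Theory Num.Theory.
From mathcomp Require Import ring lra.
Local Open Scope ring_scope.

Section Int.
Local Open Scope classical_set_scope.
Variable R : realType.
Local Open Scope ereal_scope.

Let I : set R := [set x : R | (0 <= x <= 1)%R].

Lemma I_itv : I = `[0%R, 1%R]%classic.
Proof. by apply/seteqP; split => x /=; rewrite in_itv. Qed.

Lemma mI : measurable I.
Proof. by rewrite I_itv; exact: measurable_itv. Qed.

Lemma int_mono (mu : probability R R) (f g : R -> \bar R) :
  (forall x, 0 <= f x) -> (forall x, f x <= g x) ->
  \int[mu]_x f x <= \int[mu]_x g x.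
Proof.
move=> f0 fg; have g0 x : 0 <= g x by exact: le_trans (f0 x) (fg x).
rewrite !ge0_integralTE //; apply: ereal_sup_le.
move=> _ [h hf <-]; exists h => //= x; exact: le_trans (hf x) (fg x).
Qed.

Lemma int_one (mu : probability R R) : \int[mu]_x (cst 1 x) = 1.
Proof. by rewrite integral_cst // mul1e; apply: probability_setT. Qed.

Lemma null_compl (mu : probability R R) : supported01 mu -> mu (~` I) = 0.
Proof. move=> H; rewrite probability_setC; last exact: mI. rewrite /supported01 in H. rewrite H. exact: subee. Qed.

Lemma int_restrict (mu : probability R R) (f : R -> R) :
  supported01 mu -> measurable_fun setT f ->
  \int[mu]_x (f x)%:E = \int[mu]_(x in I) (f x)%:E.
Proof.
move=> H mf.
have -> : [set: R] = I `|` ~` I by rewrite setUv.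
rewrite integral_setU //; first last.
- by apply/disj_setPCl.
- by rewrite setUv; apply/measurable_realfun.measurable_EFinP.
- exact: measurableC mI.
- exact: mI.
rewrite (null_set_integral (N := ~` I)) ?adde0 //.
- exact: measurableC mI.
- apply: (measurable_funS (E := setT)) => //; exact/measurable_realfun.measurable_EFinP.
- exact: null_compl.
Qed.

Lemma mfE (D : set R) (g : R -> R) : measurable D -> measurable_fun setT g ->
  measurable_fun (U := measurable_realfun.constructive_ereal_extended__canonical__measurable_structure_SigmaRing R) D (EFin \o g).
Proof.
move=> mD mg; apply: (measurable_funS (E := setT)) => //.
by apply/measurable_realfun.measurable_EFinP.
Qed.


Lemma intI_id (mu : probability R R) : supported01 mu ->
  \int[mu]_(x in I) x%:E = (mean mu)%:E /\ (0 <= mean mu <= 1)%R.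
Proof.
move=> H; have HI := H; rewrite /supported01 in HI.
have h0 : 0 <= \int[mu]_(x in I) x%:E.
  by apply: integral_ge0 => x /andP[x0 _]; rewrite lee_fin.
have h1 : \int[mu]_(x in I) x%:E <= 1.
  have -> : 1 = \int[mu]_(x in I) (cst 1 x).
    rewrite integral_cst; last exact: mI.
    have -> : (mu : {measure set R -> \bar R}) I = 1 by exact: HI.
    by rewrite mule1.
  apply: ge0_le_integral => //; first exact: mI.
  - by move=> x /andP[x0 _]; rewrite lee_fin.
  - by move=> x /andP[_ x1]; rewrite /= lee_fin.
have fin : \int[mu]_(x in I) x%:E \is a fin_num.
  by rewrite ge0_fin_numE // (le_lt_trans h1) // ltey.
have hm : mean mu = fine (\int[mu]_(x in I) x%:E).
  rewrite /mean (@int_restrict mu id H) //; exact: measurable_id.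
split; first by rewrite hm fineK.
by rewrite hm -!lee_fin fineK // h0 h1.
Qed.

Lemma intI_lin (mu : probability R R) (a b : R) : supported01 mu ->
  \int[mu]_(x in I) (a * x + b)%:E = (a * mean mu + b)%:E.
Proof.
move=> H; have HI := H; rewrite /supported01 in HI.
have ix : mu.-integrable I (fun x => x%:E).
  apply/integrableP; split.
    by apply: (@mfE _ id mI); exact: measurable_id.
  apply: (@le_lt_trans _ _ (\int[mu]_(x in I) (cst 1 x))).
    apply: ge0_le_integral => //.
    - exact: mI.
    - apply: (@mfE _ (@Num.norm _ R) mI); exact: measurable_realfun.normr_measurable.
    - by move=> x /andP[x0 x1]; rewrite /= lee_fin ger0_norm.
  rewrite integral_cst; last exact: mI.
  have -> : (mu : {measure set R -> \bar R}) I = 1 by exact: HI.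
  by rewrite mul1e ltey.
under eq_integral do rewrite EFinD EFinM.
rewrite integralD //; first last.
- exact: finite_measure_integrable_cst mI.
- by apply: integrableZl ix; exact: mI.
- exact: mI.
rewrite integralZl //; last exact: mI.
have [-> _] := intI_id _ H.
rewrite integral_cst; last exact: mI.
have -> : (mu : {measure set R -> \bar R}) I = 1 by exact: HI.
by rewrite mule1.
Qed.

Lemma efin_ge0 (r : R) : (0 <= r)%R -> 0 <= r%:E. Proof. by rewrite lee_fin. Qed.

Lemma iter_bounds (mu : probability R R) (A : set R) k s :
  0 <= iter_pull mu A k s <= 1.
Proof.
elim: k s => [|k IH] s /=.
  by rewrite indicE; case: (s \in A); apply/andP; split; rewrite ?lee_fin ?ler01 ?lexx ?le0e.
apply/andP; split.
  by apply: integral_ge0 => x _; case/andP: (IH (s + x)%R).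
rewrite -[X in _ <= X](int_one mu).
apply: int_mono => x; first by case/andP: (IH (s + x)%R).
by case/andP: (IH (s + x)%R).
Qed.

Lemma mpoly2 (c k M : R) : measurable_fun setT (fun x : R => (((x + c) ^+ 2 + k) / M)%R).
Proof.
apply: measurable_realfun.measurable_funM; last exact: measurable_cst.
apply: measurable_realfun.measurable_funD; last exact: measurable_cst.
apply: measurable_realfun.measurable_funX.
apply: measurable_realfun.measurable_funD; last exact: measurable_cst.
exact: measurable_id.
Qed.

Lemma mpoly1 (a b : R) : measurable_fun setT (fun x : R => (a * x + b)%R).
Proof.
apply: measurable_realfun.measurable_funD; last exact: measurable_cst.
apply: measurable_realfun.measurable_funM; first exact: measurable_cst.
exact: measurable_id.
Qed.

Lemma iter_cheb (mu : probability R R) (A : set R) (a M : R) :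
  supported01 mu -> (0 < M)%R ->
  (forall s, A s -> (1 <= (s - a) ^+ 2 / M)%R) ->
  forall k s, iter_pull mu A k s <=
    ((((s + k%:R * mean mu - a) ^+ 2 + k%:R) / M)%R)%:E.
Proof.
move=> H M0 HA; have [_ /andP[u0 u1]] := intI_id _ H.
elim=> [|k IH] s /=.
  rewrite indicE; case: (boolP (s \in A)) => [/set_mem/HA|_]; rewrite lee_fin mul0r addr0 addr0 //=.
  by rewrite divr_ge0 // ?sqr_ge0 // ltW.
set c := (s + k%:R * mean mu - a)%R.
apply: (@le_trans _ _ (\int[mu]_x ((((x + c) ^+ 2 + k%:R) / M)%R)%:E)).
  apply: int_mono => x; first by case/andP: (iter_bounds mu A k (s + x)%R).
  have -> : (x + c = s + x + k%:R * mean mu - a)%R by rewrite /c; ring.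
  exact: IH.
rewrite (@int_restrict mu (fun x => (((x + c) ^+ 2 + k%:R) / M)%R) H (mpoly2 _ _ _)).
apply: (@le_trans _ _ (\int[mu]_(x in I) (((1 + 2 * c) / M) * x + (c ^+ 2 + k%:R) / M)%R%:E)).
  apply: ge0_le_integral => //; first exact: mI.
  - move=> x _; apply: efin_ge0; apply: divr_ge0; [apply: addr_ge0; [exact: sqr_ge0|exact: ler0n]|exact: ltW].
  - apply: (@mfE _ _ mI); exact: mpoly2.
  - apply: (@mfE _ _ mI); exact: mpoly1.
  move=> x /andP[x0 x1]; rewrite lee_fin.
  have -> : (((1 + 2 * c) / M) * x + (c ^+ 2 + k%:R) / M = ((x + c ^+ 2 + 2 * c * x) + k%:R) / M)%R.
    by field; rewrite gt_eqF.
  rewrite ler_pM2r ?invr_gt0 // lerD2r.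
  by rewrite sqrrD; nra.
rewrite intI_lin // lee_fin.
have -> : (((1 + 2 * c) / M) * mean mu + (c ^+ 2 + k%:R) / M = ((1 + 2 * c) * mean mu + c ^+ 2 + k%:R) / M)%R.
  by field; rewrite gt_eqF.
rewrite ler_pM2r ?invr_gt0 //.
have -> : (s + k.+1%:R * mean mu - a = c + mean mu)%R by rewrite /c -addn1 natrD; ring.
rewrite -addn1 natrD; nra.
Qed.

Lemma iter_fin (mu : probability R R) (A : set R) k s :
  iter_pull mu A k s \is a fin_num.
Proof.
have /andP[h0 h1] := iter_bounds mu A k s.
by rewrite ge0_fin_numE // (le_lt_trans h1) // ltey.
Qed.

Lemma pass01 (mu : probability R R) c d m : (0 <= pass_prob mu c d m <= 1)%R.
Proof.
rewrite /pass_prob; set e := iter_pull _ _ _ _.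
have /andP[h0 h1] := iter_bounds mu [set s : R | (`|c - s / m%:R| <= d)%R] m 0.
by rewrite -!lee_fin fineK ?h0 ?h1 //; exact: iter_fin.
Qed.

Lemma pass_bound (mu : probability R R) c d m : supported01 mu ->
  (0 < d)%R -> (0 < m)%N -> (2 * d <= `|c - mean mu|)%R ->
  (pass_prob mu c d m <= 1 / (m%:R * d ^+ 2))%R.
Proof.
move=> H d0 m0 cd.
have mR : (0 < m%:R :> R)%R by rewrite ltr0n.
have M0 : (0 < (m%:R * d) ^+ 2 :> R)%R by rewrite exprn_gt0 // mulr_gt0.
have HA : forall s, [set s : R | (`|c - s / m%:R| <= d)%R] s ->
   (1 <= (s - m%:R * mean mu) ^+ 2 / (m%:R * d) ^+ 2)%R.
  move=> s /= hs.
  rewrite ler_pdivlMr // mul1r.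
  have -> : (s - m%:R * mean mu = m%:R * (s / m%:R - mean mu))%R.
    by field; rewrite gt_eqF.
  rewrite !exprMn ler_pM2l ?exprn_gt0 //.
  have h : (d <= `|s / m%:R - mean mu|)%R.
    have t : (`|c - mean mu| <= `|c - s / m%:R| + `|s / m%:R - mean mu|)%R.
      have -> : (c - mean mu = (c - s / m%:R) + (s / m%:R - mean mu))%R by ring.
      exact: ler_normD.
    lra.
  rewrite -(real_normK (num_real (s / m%:R - mean mu))) lerXn2r // ?nnegrE ?ltW //.
have := @iter_cheb mu _ _ _ H M0 HA m 0.
rewrite add0r subrr expr0n /= add0r => hb.
rewrite /pass_prob -lee_fin fineK; last exact: iter_fin.
apply: (le_trans hb); rewrite lee_fin.
have -> : (m%:R / (m%:R * d) ^+ 2 = 1 / (m%:R * d ^+ 2) :> R)%R by field; rewrite ?gt_eqF.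
exact: lexx.
Qed.

End Int.
Section Reals.
Variable R : realType.

Lemma ln2_ge : (1 / 2 <= ln (2 : R)).
Proof.
have := expR_ge1Dx (- ln (2 : R)).
rewrite expRN lnK ?posrE //.
lra.
Qed.

Lemma ln_ge2 (x : R) : 16 <= x -> 2 <= ln x.
Proof.
move=> hx.
have h16 : ln (16 : R) = ln (2 : R) *+ 4.
  have -> : (16 : R) = 2 ^+ 4 by rewrite -natrX.
  by rewrite lnXn.
apply: (@le_trans _ _ (ln (16 : R))).
  have := ln2_ge; rewrite h16; move: (ln (2:R)) => l hl.
  rewrite (_ : l *+ 4 = l * 4); [lra | by rewrite mulr_natr].
by rewrite ler_ln ?posrE //; lra.
Qed.

Lemma ln63 : ln (3 : R) <= 3 / 4 * ln 6.
Proof.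
have h3 : ln ((3 : R) ^+ 4) = ln (3 : R) *+ 4 by rewrite lnXn.
have h6 : ln ((6 : R) ^+ 3) = ln (6 : R) *+ 3 by rewrite lnXn.
have : ln ((3 : R) ^+ 4) <= ln ((6 : R) ^+ 3).
  rewrite ler_ln ?posrE ?exprn_gt0 //.
  by rewrite -!natrX ler_nat.
rewrite h3 h6; clear h3 h6; move: (ln (3:R)) (ln (6:R)) => l3 l6.
have e1 : l3 *+ 4 = l3 * 4 by rewrite mulr_natr.
have e2 : l6 *+ 3 = l6 * 3 by rewrite mulr_natr.
rewrite e1 e2; clear e1 e2; lra.
Qed.

Lemma pow_exp (y : R) (a : nat) : 0 <= 1 - y -> (1 - y) ^+ a <= expR (- (a%:R * y)).
Proof.
move=> hy.
have : 1 - y <= expR (- y) by have := expR_ge1Dx (- y); lra.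
move=> h; apply: (@le_trans _ _ (expR (- y) ^+ a)).
  by rewrite lerXn2r // nnegrE // ltW // expR_gt0.
by rewrite -expRM_natl mulrN.
Qed.

Lemma exists_big (N : nat) (x : 'I_N.+1 -> R) (y : R) :
  y <= \sum_(b < N.+1) x b -> exists b, y <= N.+1%:R * x b.
Proof.
move=> h; apply/not_existsP => hn.
have hlt : forall b, N.+1%:R * x b < y.
  by move=> b; rewrite ltNge; apply/negP => /(fun z => hn b z).
have : \sum_(b < N.+1) (N.+1%:R * x b) < \sum_(b < N.+1) y.
  apply: ltr_sum => //; apply/hasP; exists ord0 => //; exact: mem_index_enum.
rewrite -mulr_sumr sumr_const card_ord mulr_natl.
rewrite -mulr_natl.
move=> h2.
have : N.+1%:R * y <= N.+1%:R * \sum_(b < N.+1) x b by rewrite ler_pM2l ?ltr0Sn.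
lra.
Qed.

Lemma ceilN_ge (x : R) : 0 <= x -> x <= (Defs.ceilN x)%:R.
Proof.
move=> x0; rewrite /Defs.ceilN natr_absz ger0_norm ?ceil_ge //.
by rewrite ceil_ge0; lra.
Qed.

Lemma ceilN_lt (x : R) : 0 <= x -> (Defs.ceilN x)%:R < x + 1.
Proof.
move=> x0; rewrite /Defs.ceilN natr_absz ger0_norm; last by rewrite ceil_ge0; lra.
have /andP[h _] := ceil_itv x.
move: h; rewrite intrD /=; lra.
Qed.

End Reals.
Lemma two3 (R : realType) (x : R) : x <= 1/3 -> 2/3 <= 1 - x.
Proof. lra. Qed.

Theorem mainTheorem2 (R : realType) (n : nat) (sigma eps : R)
    (q : 'I_n -> probability R R) (ut : 'I_n -> R) :
  n%:R^-1 <= sigma -> sigma <= 1 ->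
  0 < eps -> eps < 1 ->
  (forall i, supported01 (q i)) ->
  (forall i, 0 <= ut i <= 1) ->
  (exists pi : 'I_n -> R, smooth_strategy sigma pi /\
     eps / 2 <= `|dotp pi (fun i => mean (q i)) - dotp pi ut|) ->
  2 / 3 <= P1_reject_prob sigma eps q ut.
Proof.
move=> hsig hsig1 e0 e1 hq hut [pi [[pi0 [pisum pis]] hpi]].
have n0 : (0 < n)%N.
  case: n q ut pi pi0 pisum pis hpi {hsig hq hut} => // q ut pi _ + _ _.
  by rewrite big_ord0 => /eqP; rewrite eq_sym oner_eq0.
have nR : (0 < n%:R :> R) by rewrite ltr0n.
have sig0 : 0 < sigma by apply: lt_le_trans hsig; rewrite invr_gt0.
pose u i := mean (q i).
pose dd i := `|u i - ut i|.
have hd01 i : 0 <= dd i <= 1.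
  have [_ /andP[u0 u1]] := @intI_id _ _ (hq i).
  have /andP[t0 t1] := hut i.
  rewrite /dd normr_ge0 /= ler_norml; apply/andP; split; rewrite /u; lra.
have M1 : eps / 2 <= \sum_i pi i * dd i.
  apply: (le_trans hpi).
  have -> : dotp pi (fun i => mean (q i)) - dotp pi ut = \sum_i pi i * (u i - ut i).
    by rewrite /dotp -sumrB; apply: eq_bigr => i _; rewrite mulrBr.
  apply: (le_trans (ler_norm_sum _ _ _)); apply: ler_sum => i _.
  by rewrite normrM ger0_norm.
pose x := log4 (1 / eps).
have ln4 : 0 < ln (4 : R) by apply: ln_gt0; lra.
have lne : 0 <= ln (1 / eps) by apply: ln_ge0; rewrite ler_pdivlMr // mul1r ltW.
have x0 : 0 <= x by rewrite /x /log4 divr_ge0 // ltW.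
pose Bm := P1_Bmax eps.
have hBm1 : x <= Bm%:R by exact: ceilN_ge.
have hBm2 : Bm%:R < x + 1 by exact: ceilN_lt.
have heB : 1 <= P1_eps eps Bm.
  rewrite /P1_eps -ler_pdivrMl // mulr1.
  have h4 : 0 < (4 : R) ^+ Bm by rewrite exprn_gt0.
  rewrite -ler_ln ?posrE ?invr_gt0 // lnXn //.
  rewrite (_ : ln (4:R) *+ Bm = Bm%:R * ln 4); last by rewrite mulr_natl.
  have -> : ln eps^-1 = x * ln 4 by rewrite /x /log4 div1r divfK // gt_eqF.
  by rewrite ler_pM2r.
have hL : Bm.+1%:R <= P1_L eps by rewrite /P1_L -/x -addn1 natrD; lra.
have epsb0 b : 0 < P1_eps eps b by rewrite /P1_eps mulr_gt0 // exprn_gt0.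
pose ind i (b : nat) := (((P1_eps eps b / 4 <= dd i)%R)%:R : R).
have M2 i : dd i <= eps / 4 + \sum_(b < Bm.+1) ind i b * P1_eps eps b.
  set S := \sum_(b < Bm.+1) _.
  rewrite leNgt; apply/negP => hlt.
  have tge b : 0 <= ind i b * P1_eps eps b by rewrite mulr_ge0 // ?ler0n // ltW.
  have S0 : 0 <= S by apply: sumr_ge0 => b _; exact: tge.
  have term_le (b : 'I_Bm.+1) : ind i b * P1_eps eps b <= S.
    rewrite /S (bigD1 b) //= lerDl; apply: sumr_ge0 => c _; exact: tge.
  have claim b : (b <= Bm)%N -> P1_eps eps b / 4 <= dd i.
    elim: b => [_|b IH hb].
      rewrite /P1_eps expr0 mulr1; lra.
    have hb' : (b < Bm.+1)%N by rewrite ltnS ltnW.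
    have := term_le (Ordinal hb'); rewrite /= /ind IH ?(ltnW hb) // mul1r => hS.
    have -> : P1_eps eps b.+1 / 4 = P1_eps eps b by rewrite /P1_eps exprSr; field.
    lra.
  have := term_le ord_max; rewrite /= /ind claim // mul1r => hS.
  have := hd01 i; move/andP => [_ h1].
  lra.
pose cb (b : nat) := \sum_i ind i b.
have ind01 i b : 0 <= ind i b <= 1.
  by rewrite /ind; case: (P1_eps eps b / 4 <= dd i)%R; rewrite ?lexx ?ler01.
have M3 : eps / 4 <= \sum_(b < Bm.+1) sigma * (P1_eps eps b * cb b).
  have : \sum_i pi i * dd i <= eps / 4 + \sum_(b < Bm.+1) sigma * (P1_eps eps b * cb b).
    apply: (le_trans (ler_sum _ (fun i _ => ler_wpM2l (pi0 i) (M2 i)))).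
    under eq_bigr do rewrite mulrDr.
    rewrite big_split /= -mulr_suml pisum mul1r lerD2l.
    under eq_bigr do rewrite mulr_sumr.
    rewrite exchange_big /=; apply: ler_sum => b _.
    rewrite /cb mulr_sumr mulr_sumr; apply: ler_sum => i _.
    rewrite [X in _ <= sigma * X]mulrC; apply: ler_wpM2r (pis i).
    by have /andP[i0 _] := ind01 i b; rewrite mulr_ge0 // ltW.
  lra.
have [b0 M4] := @exists_big _ _ (fun b : 'I_Bm.+1 => sigma * (P1_eps eps b * cb b)) _ M3.
pose a := P1_a n sigma eps b0.
pose c := cb b0.
pose P := (4 : R) ^+ b0.
have P0 : 0 < P by rewrite exprn_gt0.
have c0 : 0 <= c by apply: sumr_ge0 => i _; have /andP[] := ind01 i b0.
have ln6 : 0 < ln (6 : R) by apply: ln_gt0; lra.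
have L0 : 2 <= P1_L eps by rewrite /P1_L -/x; lra.
have hT : 1 <= 4 * (P1_L eps * sigma * P * c).
  have h1 : Bm.+1%:R * (sigma * (P1_eps eps b0 * c)) <= P1_L eps * (sigma * (P1_eps eps b0 * c)).
    by apply: ler_wpM2r => //; rewrite mulr_ge0 // ?mulr_ge0 // ltW.
  have h2 : P1_L eps * (sigma * (P1_eps eps b0 * c)) = eps * (P1_L eps * sigma * P * c).
    by rewrite /P1_eps /P; ring.
  have h3 : eps / 4 <= eps * (P1_L eps * sigma * P * c) by rewrite -h2; exact: le_trans M4 h1.
  have h4 : eps * (1 / 4) <= eps * (P1_L eps * sigma * P * c) by rewrite mul1r.
  rewrite ler_pM2l // in h4; lra.
have ha : P * (4 * n%:R * sigma) * P1_L eps * ln 6 <= a%:R.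
  apply: ceilN_ge; apply: mulr_ge0; last exact: ltW.
  apply: mulr_ge0; last lra.
  apply: mulr_ge0; first exact: ltW.
  by apply: mulr_ge0; [apply: mulr_ge0 | exact: ltW].
have M5 : n%:R * ln 6 <= a%:R * c.
  apply: (@le_trans _ _ (P * (4 * n%:R * sigma) * P1_L eps * ln 6 * c)); last first.
    exact: ler_wpM2r.
  have -> : P * (4 * n%:R * sigma) * P1_L eps * ln 6 * c = (n%:R * ln 6) * (4 * (P1_L eps * sigma * P * c)).
    by ring.
  by rewrite ler_peMr // mulr_ge0 // ?ltW.
pose e := P1_eps eps b0.
have e0' : 0 < e := epsb0 b0.
have a1 : 1 <= a%:R :> R.
  rewrite ler1n lt0n; apply/negP => /eqP a0; move: M5; rewrite a0 mul0r.
  have := mulr_gt0 nR ln6; lra.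
have hlog : 2 <= ln (12 * P1_L eps * a%:R) by apply: ln_ge2; nra.
pose m := P1_m n sigma eps b0.
have hm : 128 * ln (12 * P1_L eps * a%:R) / e ^+ 2 <= m%:R.
  apply: ceilN_ge; apply: divr_ge0; last by rewrite sqr_ge0.
  apply: mulr_ge0 => //; lra.
have md : 4 <= m%:R * (e / 8) ^+ 2.
  have : 128 * ln (12 * P1_L eps * a%:R) / e ^+ 2 * (e / 8) ^+ 2 <= m%:R * (e / 8) ^+ 2.
    by apply: ler_wpM2r => //; rewrite sqr_ge0.
  have -> : 128 * ln (12 * P1_L eps * a%:R) / e ^+ 2 * (e / 8) ^+ 2 = 2 * ln (12 * P1_L eps * a%:R).
    by field; rewrite gt_eqF.
  lra.
have m0 : (0 < m)%N.
  rewrite lt0n; apply/negP => /eqP m0; move: md; rewrite m0 mul0r; lra.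
have pass_le i : P1_eps eps b0 / 4 <= dd i ->
    pass_prob (q i) (ut i) (P1_eps eps b0 / 8) (P1_m n sigma eps b0) <= 1 / 4.
  move=> hi.
  apply: (le_trans (@pass_bound _ _ _ _ _ (hq i) _ m0 _)).
  - by rewrite divr_gt0.
  - by rewrite distrC -/e; move: hi; rewrite /dd /u -/e; lra.
  rewrite -/e -/m !div1r lef_pV2 ?posrE //; last by rewrite mulr_gt0 ?ltr0n // exprn_gt0 // divr_gt0.
pose pb (b : nat) := n%:R^-1 * \sum_(i < n) pass_prob (q i) (ut i) (P1_eps eps b / 8) (P1_m n sigma eps b).
have pb01 b : 0 <= pb b <= 1.
  rewrite /pb mulr_ge0 ?invr_ge0 ?ler0n ?sumr_ge0 //=; last by move=> i _; have /andP[] := @pass01 _ (q i) (ut i) (P1_eps eps b / 8) (P1_m n sigma eps b).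
  rewrite ler_pdivrMl // mulr1.
  apply: (@le_trans _ _ (\sum_(i < n) (1 : R))); last by rewrite sumr_const card_ord.
  by apply: ler_sum => i _; have /andP[] := @pass01 _ (q i) (ut i) (P1_eps eps b / 8) (P1_m n sigma eps b).
pose p := pb b0.
have hp : p <= 1 - 3 / 4 * c / n%:R.
  rewrite /p /pb.
  have : \sum_(i < n) pass_prob (q i) (ut i) (P1_eps eps b0 / 8) (P1_m n sigma eps b0)
       <= \sum_(i < n) (1 - 3 / 4 * ind i b0).
    apply: ler_sum => i _; rewrite /ind.
    case: (boolP (P1_eps eps b0 / 4 <= dd i)%R) => hi /=.
      by have := pass_le i hi; lra.
    by have /andP[] := @pass01 _ (q i) (ut i) (P1_eps eps b0 / 8) (P1_m n sigma eps b0); lra.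
  rewrite sumrB sumr_const card_ord -mulr_sumr -/(cb b0) -/c => h.
  have hn : 0 <= n%:R^-1 :> R by rewrite invr_ge0 ler0n.
  apply: (le_trans (ler_wpM2l hn h)); rewrite le_eqVlt; apply/orP; left; apply/eqP.
  by field; rewrite gt_eqF.
have hp0 : 0 <= p by have /andP[] := pb01 b0.
have M7 : P1_accept_prob sigma eps q ut <= p ^+ a.
  rewrite /P1_accept_prob (bigD1 b0) //=.
  rewrite prodr_const card_ord -/(pb b0) -/p.
  apply: ler_piMr; first by rewrite exprn_ge0.
  apply: prodr_ile1 => b _; apply/andP; split.
    by apply: prodr_ge0 => t _; have /andP[] := pb01 b.
  by apply: prodr_ile1 => t _; exact: pb01.
have hy : 0 <= 1 - 3 / 4 * c / n%:R by exact: le_trans hp0 hp.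
have M8 : p ^+ a <= 1 / 3.
  apply: (@le_trans _ _ ((1 - 3 / 4 * c / n%:R) ^+ a)).
    by rewrite lerXn2r // nnegrE.
  apply: (le_trans (@pow_exp _ _ a hy)).
  have -> : 1 / 3 = expR (- ln (3 : R)) by rewrite expRN lnK ?posrE // div1r.
  rewrite ler_expR lerN2.
  have h1 : 3 / 4 * ln 6 <= a%:R * (3 / 4 * c / n%:R).
    have -> : a%:R * (3 / 4 * c / n%:R) = 3 / 4 * (a%:R * c) / n%:R by ring.
    rewrite ler_pdivlMr // mulrC mulrA [n%:R * _]mulrC -mulrA.
    by apply: ler_wpM2l; [rewrite divr_ge0 | exact: M5].
  exact: le_trans (@ln63 R) h1.
rewrite /P1_reject_prob; apply: two3; exact: le_trans M7 M8.
Qed.
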